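(* Let $q\ge2$ and let $W$ be a $q$-ary symmetric channel on an alphabet $\mathcal{X}=\mathcal{Y}$ with $|\mathcal{X}|=q$, i.e., $W(y|x)=v$ if $y=x$ and $W(y|x)=u$ if $y\ne x$, where $u,v\in[0,1]$ and $v=1-(q-1)u$. Then $$\eta^J_\infty(W):=\sup_{P_0,P_1\in\Delta(\mathcal{X})}\frac{D^J_\infty(Q_0,Q_1)}{D^J_\infty(P_0,P_1)}=\frac{|v-u|}{v+u},$$ where $Q_i(y)=\sum_xP_i(x)W(y|x)$. Furthermore, this supremum is achieved in the limit by uniform binary distributions (distinct input pairs supported on a common two-element set that both converge to the uniform distribution on that set).
   Context: $\Delta(\mathcal{X})$ is the probability simplex on $\mathcal{X}$. $D_\infty(P\|Q)=\log\max_x\frac{P(x)}{Q(x)}$ and $D^J_\infty(P,Q)=D_\infty(P\|Q)+D_\infty(Q\|P)$. *)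

(* Defs.v *)
From HB Require Import structures.
From mathcomp Require Import all_boot all_order all_algebra.
From mathcomp Require Import all_classical all_reals all_analysis.
Set Implicit Arguments. Unset Strict Implicit. Unset Printing Implicit Defensive.
Import Order.TTheory GRing.Theory Num.Theory.
Import numFieldNormedType.Exports.
Local Open Scope classical_set_scope.
Local Open Scope ring_scope.

Section Defs.
Variables (R : realType) (X : finType).

Definition is_dist (P : X -> R) : Prop :=
  (forall x, 0 <= P x) /\ \sum_(x : X) P x = 1.

(* P and Q have the same support (i.e. D^J_oo(P,Q) < +oo). *)
Definition same_support (P Q : X -> R) : Prop :=
  forall x, (P x == 0) = (Q x == 0).

(* max_x P(x)/Q(x); terms with P x = Q x = 0 contribute 0/0 = 0 (and are
   ignored since the max is >= 1 for distributions). Only used on pairs with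
   the same support, where this is the paper's quantity. *)
Definition maxratio (P Q : X -> R) : R :=
  \big[Num.max/0]_(x : X) (P x / Q x).

Definition Dinf (P Q : X -> R) : R := ln (maxratio P Q).

Definition DJinf (P Q : X -> R) : R := Dinf P Q + Dinf Q P.

(* q-ary symmetric channel: W x y = W(y|x). *)
Definition qsc (u v : R) (x y : X) : R := if y == x then v else u.

Definition push (W : X -> X -> R) (P : X -> R) (y : X) : R :=
  \sum_(x : X) P x * W x y.

Definition jratio (W : X -> X -> R) (P0 P1 : X -> R) : R :=
  DJinf (push W P0) (push W P1) / DJinf P0 P1.

(* admissible input pairs: distinct distributions with 0 < D^J_oo < +oo *)
Definition admissible (P0 P1 : X -> R) : Prop :=
  [/\ is_dist P0, is_dist P1, same_support P0 P1 & exists x, P0 x != P1 x].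

Definition unif_binary_seq (a b : X) (P0 P1 : nat -> X -> R) : Prop :=
  [/\ forall n, is_dist (P0 n) /\ is_dist (P1 n),
      forall n x, x != a -> x != b -> P0 n x = 0 /\ P1 n x = 0,
      forall n, exists x, P0 n x != P1 n x,
      (fun n => P0 n a) @ \oo --> (2^-1 : R) /\ (fun n => P0 n b) @ \oo --> (2^-1 : R)
    & (fun n => P1 n a) @ \oo --> (2^-1 : R) /\ (fun n => P1 n b) @ \oo --> (2^-1 : R)].

End Defs.

(* Main.v *)
Require Import Defs.
From HB Require Import structures.
From mathcomp Require Import all_boot all_order all_algebra.
From mathcomp Require Import all_classical all_reals all_analysis.
Import Order.TTheory GRing.Theory Num.Theory.
Import numFieldNormedType.Exports.
Local Open Scope classical_set_scope.
Local Open Scope ring_scope.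
From mathcomp Require Import ring lra.
Section S.
Variable R : realType.
Definition Lg (u v x : R) := ln (v * x + u) - ln (u * x + v).
Lemma derive_lnaff (a b z : R) : 0 < a * z + b ->
  is_derive z 1 (fun x => ln (a * x + b)) ((a * z + b)^-1 * a).
Proof.
move=> h1.
have hg : is_derive z 1 (fun x => a * x + b) a.
  apply: is_derive_eq.
  by rewrite /GRing.scale /= addr0 mulr1.
exact: (@is_derive1_comp _ (@ln R) (fun x => a * x + b) z _ _ (is_derive1_ln h1) hg).
Qed.

Lemma deriv_phi (u v k l z : R) : 0 < z -> 0 < v * z + u -> 0 < u * z + v ->
  is_derive z 1 (fun x => k * ln x - l * Lg u v x)
    (k * z^-1 - l * ((v * z + u)^-1 * v - (u * z + v)^-1 * u)).
Proof.
move=> z0 h1 h2.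
have d1 := derive_lnaff _ _ _ h1.
have d2 := derive_lnaff _ _ _ h2.
have d0 : is_derive z 1 (@ln R) z^-1 by exact: is_derive1_ln.
rewrite /Lg.
apply: is_derive_eq.
done.
Qed.

Lemma mono_phi (u v k l a b : R) : 0 <= u -> 0 <= v -> 0 < u + v -> 0 <= a ->
  (forall x, a < x < b -> l * (v ^+ 2 - u ^+ 2) * x <= k * ((v * x + u) * (u * x + v))) ->
  forall x y, a < y -> y <= x -> x < b ->
  l * (Lg u v x - Lg u v y) <= k * (ln x - ln y).
Proof.
move=> u0 v0 uv a0 hd x y ay yx xb.
have pos1 : forall z, 0 < z -> 0 < v * z + u.
  move=> z z0; have [v0'|] := ltP 0 v.
    by rewrite ltr_pwDl // mulr_gt0.
  move=> vle; have -> : v = 0 by apply/le_anti; rewrite vle v0.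
  by rewrite mul0r add0r; lra.
have pos2 : forall z, 0 < z -> 0 < u * z + v.
  move=> z z0; have [u0'|] := ltP 0 u.
    by rewrite ltr_pwDl // mulr_gt0.
  move=> ule; have -> : u = 0 by apply/le_anti; rewrite ule u0.
  by rewrite mul0r add0r; lra.
pose f := fun x => k * ln x - l * Lg u v x.
suff : f y <= f x by rewrite /f; lra.
have y0 : 0 < y by lra.
apply: (@ger0_derive1_ndecr R f y x) => //.
- move=> z; rewrite in_itv /= => /andP[yz zx].
  have z0 : 0 < z by lra.
  by case: (deriv_phi _ _ k l _ z0 (pos1 _ z0) (pos2 _ z0)).
- move=> z; rewrite in_itv /= => /andP[yz zx].
  have z0 : 0 < z by lra.
  have D := deriv_phi _ _ k l _ z0 (pos1 _ z0) (pos2 _ z0).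
  rewrite derive1E; case: D => _ ->.
  have h := hd z (ltac:(lra)).
  have p1 := pos1 _ z0; have p2 := pos2 _ z0.
  have -> : k * z^-1 - l * ((v * z + u)^-1 * v - (u * z + v)^-1 * u) =
     (k * ((v * z + u) * (u * z + v)) - l * (v ^+ 2 - u ^+ 2) * z) / (z * (v * z + u) * (u * z + v)).
    by field; rewrite ?gt_eqF // ?mulf_neq0 // gt_eqF.
  apply: divr_ge0; first lra.
  by rewrite !mulr_ge0 // ltW.
- apply: continuous_in_subspaceT => z; rewrite inE /= in_itv /= => /andP[yz zx].
  have z0 : 0 < z by lra.
  have D := deriv_phi _ _ k l _ z0 (pos1 _ z0) (pos2 _ z0).
  case: D => D _; exact/differentiable_continuous/derivable1_diffP.
Qed.

Lemma lip_up (u v x y : R) : 0 <= u -> 0 <= v -> 0 < u + v -> 0 < y -> y <= x ->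
  `|Lg u v x - Lg u v y| <= `|v - u| / (v + u) * (ln x - ln y).
Proof.
move=> u0 v0 uv y0 yx.
have key : forall l : R, (l = 1 \/ l = -1) ->
    l * (Lg u v x - Lg u v y) <= `|v - u| / (v + u) * (ln x - ln y).
  move=> l hl.
  apply: (@mono_phi u v _ l 0 (x + 1)) => //; last lra.
  move=> z /andP[z0 _].
  have e0 : 0 <= `|v - u| by [].
  have le1 : l * (v - u) <= `|v - u|.
    case: hl => ->; first by rewrite mul1r ler_norm.
    by rewrite mulN1r -normrN ler_norm.
  have h1 : (u + v) ^+ 2 * z <= (v * z + u) * (u * z + v).
    have : 0 <= u * v * (z - 1) ^+ 2 by rewrite mulr_ge0 ?sqr_ge0 ?mulr_ge0.
    lra.
  have -> : `|v - u| / (v + u) * ((v * z + u) * (u * z + v)) =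
            `|v - u| * (((v * z + u) * (u * z + v)) / (u + v)).
    by rewrite addrC; field; rewrite gt_eqF.
  have h2 : (u + v) * z <= ((v * z + u) * (u * z + v)) / (u + v).
    by rewrite ler_pdivlMr // mulrAC -expr2.
  have -> : l * (v ^+ 2 - u ^+ 2) * z = l * (v - u) * ((u + v) * z) by ring.
  apply: (le_trans (y := `|v - u| * ((u + v) * z))).
    by apply: ler_wpM2r => //; rewrite mulr_ge0 // ltW.
  by apply: ler_wpM2l.
rewrite ler_norml; apply/andP; split.
  have := key (-1) (or_intror erefl); lra.
have := key 1 (or_introl erefl); lra.
Qed.

Lemma lip_low (u v k a b x y : R) : 0 <= u -> 0 <= v -> 0 < u + v -> 0 <= a ->
  (forall z, a < z < b -> k * ((v * z + u) * (u * z + v)) <= `|v ^+ 2 - u ^+ 2| * z) ->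
  a < y -> y <= x -> x < b ->
  k * (ln x - ln y) <= `|Lg u v x - Lg u v y|.
Proof.
move=> u0 v0 uv a0 hd ay yx xb.
have [vu|uv'] := leP u v.
  have := @mono_phi u v (- k) (-1) a b u0 v0 uv a0.
  move=> /(_ _ x y ay yx xb) h.
  have : k * (ln x - ln y) <= Lg u v x - Lg u v y.
    suff H : -1 * (Lg u v x - Lg u v y) <= - k * (ln x - ln y) by lra.
    apply: h => z hz; have := hd z hz.
    rewrite ger0_norm; last by rewrite subr_ge0 ler_sqr.
    lra.
  move=> h2; apply: (le_trans h2); exact: ler_norm.
have := @mono_phi u v (- k) 1 a b u0 v0 uv a0.
move=> /(_ _ x y ay yx xb) h.
have : k * (ln x - ln y) <= - (Lg u v x - Lg u v y).
  suff H : 1 * (Lg u v x - Lg u v y) <= - k * (ln x - ln y) by lra.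
  apply: h => z hz; have := hd z hz.
  rewrite ler0_norm; last by rewrite subr_le0 ler_sqr // ltW.
  lra.
move=> h2; apply: (le_trans h2); rewrite -normrN; exact: ler_norm.
Qed.
Section SX.
Variable X : finType.
Implicit Types P Q : X -> R.
Lemma maxratio_ge0 P Q : 0 <= maxratio P Q.
Proof.
rewrite /maxratio; elim/big_rec: _ => // i x _ hx.
by rewrite le_max hx orbT.
Qed.

Lemma maxratio_ub P Q x : P x / Q x <= maxratio P Q.
Proof.
rewrite /maxratio (bigD1 x) //=. by rewrite le_max lexx.
Qed.

Lemma maxratio_le P Q B : 0 <= B -> (forall x, P x / Q x <= B) -> maxratio P Q <= B.
Proof.
move=> B0 h; rewrite /maxratio; elim/big_ind: _ => //.
by move=> a b a0 b0; rewrite ge_max a0.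
Qed.

Lemma dist_le P0 P1 : is_dist P1 -> same_support P0 P1 -> forall x, P0 x <= maxratio P0 P1 * P1 x.
Proof.
move=> [d1 _] ss x.
have [h|nz] := eqVneq (P1 x) 0.
  have -> : P0 x = 0 by apply/eqP; rewrite (ss x) h eqxx.
  by rewrite h mulr0.
have := maxratio_ub P0 P1 x.
have [p1|p1|p1] := ltgtP (P1 x) 0.
- by have := d1 x; rewrite leNgt p1.
- by rewrite ler_pdivrMr // mulrC.
- by move: nz; rewrite p1 eqxx.
Qed.

Lemma term_le_sum (F : X -> R) y : (forall x, 0 <= F x) -> F y <= \sum_x F x.
Proof.
move=> h; rewrite (bigD1 y) //= lerDl; apply: sumr_ge0 => x _; exact: h.
Qed.

Lemma compl_le P0 P1 : is_dist P0 -> is_dist P1 -> same_support P0 P1 ->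
  forall y, maxratio P0 P1 * P1 y - P0 y <= maxratio P0 P1 - 1.
Proof.
move=> [d0 s0] [d1 s1] ss y.
set M := maxratio P0 P1.
have -> : M - 1 = \sum_x (M * P1 x - P0 x).
  by rewrite sumrB -mulr_sumr s0 s1 mulr1.
apply: (term_le_sum (fun x => M * P1 x - P0 x)) => x.
by rewrite subr_ge0 dist_le //; split.
Qed.

Lemma maxratio_ge1 P0 P1 : is_dist P0 -> is_dist P1 -> same_support P0 P1 ->
  1 <= maxratio P0 P1.
Proof.
move=> [d0 s0] [d1 s1] ss.
have : \sum_x P0 x <= \sum_x (maxratio P0 P1 * P1 x).
  by apply: ler_sum => x _; apply: dist_le => //; split.
by rewrite -mulr_sumr s0 s1 mulr1.
Qed.

Lemma maxratio_gt1 P0 P1 : admissible P0 P1 -> 1 < maxratio P0 P1.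
Proof.
move=> [[d0 s0] [d1 s1] ss [x0 hx0]].
rewrite ltNge; apply/negP => hM.
have le : forall x, P0 x <= P1 x.
  move=> x; apply: (le_trans (dist_le _ _ (conj d1 s1) ss x)).
  by rewrite ler_piMl.
have hs : \sum_x (P1 x - P0 x) = 0 by rewrite sumrB s0 s1 subrr.
have hge : forall x, true -> 0 <= P1 x - P0 x by move=> x _; rewrite subr_ge0 le.
have := psumr_eq0P hge hs isT (i:=x0).
by move/eqP; rewrite subr_eq0 eq_sym (negbTE hx0).
Qed.

Lemma push_qsc u v P y : is_dist P -> push (qsc u v) P y = u + (v - u) * P y.
Proof.
move=> [_ s].
rewrite /push (bigD1 y) //= /qsc eqxx.
under eq_bigr => x hx do rewrite eq_sym (negbTE hx).
rewrite -big_distrl /=.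
move: s; rewrite (bigD1 y) //= => s.
have -> : \sum_(i | i != y) P i = 1 - P y by rewrite -s addrC addrK.
ring.
Qed.

Lemma coord_bound (u v M N s t : R) : 0 <= u -> 0 <= v -> 1 <= M -> 1 <= N ->
  s <= M * t -> t <= N * s -> M * t - s <= M - 1 -> N * s - t <= N - 1 ->
  (u <= v -> (u + (v - u) * s) * (v * (N - 1) + u * N * (M - 1))
             <= (u + (v - u) * t) * (v * M * (N - 1) + u * (M - 1))) /\
  (v <= u -> (u + (v - u) * s) * (v * N * (M - 1) + u * (N - 1))
             <= (u + (v - u) * t) * (v * (M - 1) + u * M * (N - 1))).
Proof.
move=> u0 v0 M1 N1 h1 h2 h3 h4; split => huv.
- have -> : (u + (v - u) * t) * (v * M * (N - 1) + u * (M - 1)) =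
     (u + (v - u) * s) * (v * (N - 1) + u * N * (M - 1)) +
     ((v - u) * (N - 1) * v * (M * t - s) + u * (v - u) * (M - 1) * (N - 1 - (N * s - t))).
    ring.
  rewrite lerDl; apply: addr_ge0; repeat apply: mulr_ge0; lra.
- have -> : (u + (v - u) * t) * (v * (M - 1) + u * M * (N - 1)) =
     (u + (v - u) * s) * (v * N * (M - 1) + u * (N - 1)) +
     ((u - v) * (M - 1) * v * (N * s - t) + u * (u - v) * (N - 1) * (M - 1 - (M * t - s))).
    ring.
  rewrite lerDl; apply: addr_ge0; repeat apply: mulr_ge0; lra.
Qed.

Lemma ratio_le (a b n d : R) : 0 <= b -> 0 < d -> 0 <= n -> a * d <= b * n -> a / b <= n / d.
Proof.
move=> b0 d0 n0 h.
have [->|bn0] := eqVneq b 0; first by rewrite invr0 mulr0 divr_ge0 // ltW.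
have bp : 0 < b by rewrite lt_def bn0.
by rewrite ler_pdivrMr // mulrAC ler_pdivlMr // [n * b]mulrC.
Qed.

Lemma ln_le_ge1 (m B : R) : 1 <= B -> m <= B -> ln m <= ln B.
Proof.
move=> B1 mB.
have [m0|m0] := leP m 0; first by rewrite ln0 // ln_ge0.
by rewrite ler_ln // posrE; lra.
Qed.

Lemma lnM' (a b : R) : 0 < a -> 0 < b -> ln (a * b) = ln a + ln b.
Proof. by move=> a0 b0; rewrite lnM. Qed.

Lemma lnD' (a b : R) : 0 < a -> 0 < b -> ln (a / b) = ln a - ln b.
Proof. by move=> a0 b0; rewrite ln_div. Qed.

Lemma Apos (u v M N : R) : 0 <= u -> 0 <= v -> 0 < u + v -> 1 < M -> 1 < N ->
  0 < v * M * (N - 1) + u * (M - 1).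
Proof.
move=> u0 v0 uv M1 N1.
have [v0'|] := ltP 0 v.
  have h1 : 0 <= u * (M - 1) by rewrite mulr_ge0 // subr_ge0 ltW.
  have h2 : 0 < v * M * (N - 1) by repeat apply: mulr_gt0; lra.
  lra.
move=> vle; have u0' : 0 < u by lra.
have h1 : 0 <= v * M * (N - 1) by repeat apply: mulr_ge0; lra.
have h2 : 0 < u * (M - 1) by rewrite mulr_gt0 // subr_gt0.
lra.
Qed.

Lemma pos2 (a b x y : R) : 0 <= a -> 0 <= b -> 0 < a + b -> 0 < x -> 0 < y -> 0 < a * x + b * y.
Proof.
move=> a0 b0 ab x0 y0.
have [a0'|] := ltP 0 a.
  have : 0 < a * x by rewrite mulr_gt0.
  have : 0 <= b * y by rewrite mulr_ge0 // ltW.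
  lra.
move=> ale; have b0' : 0 < b by lra.
have : 0 <= a * x by rewrite mulr_ge0 // ltW.
have : 0 < b * y by rewrite mulr_gt0.
lra.
Qed.

Lemma adm_sym P0 P1 : admissible P0 P1 -> admissible P1 P0.
Proof.
move=> [d0 d1 ss [x hx]]; split => //; try (by move=> y; rewrite ss).
by exists x; rewrite eq_sym.
Qed.

Lemma dist_le1 P x : is_dist P -> P x <= 1.
Proof. by move=> [d s]; rewrite -s; apply: term_le_sum. Qed.

Lemma maxQ_bound u v P0 P1 : 0 <= u -> 0 <= v -> 0 < u + v -> admissible P0 P1 ->
  (u <= v -> maxratio (push (qsc u v) P0) (push (qsc u v) P1) <=
     (v * maxratio P0 P1 * (maxratio P1 P0 - 1) + u * (maxratio P0 P1 - 1)) /
     (v * (maxratio P1 P0 - 1) + u * maxratio P1 P0 * (maxratio P0 P1 - 1))) /\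
  (v <= u -> maxratio (push (qsc u v) P0) (push (qsc u v) P1) <=
     (v * (maxratio P0 P1 - 1) + u * maxratio P0 P1 * (maxratio P1 P0 - 1)) /
     (v * maxratio P1 P0 * (maxratio P0 P1 - 1) + u * (maxratio P1 P0 - 1))).
Proof.
move=> u0 v0 uv adm.
have M1 : 1 < maxratio P0 P1 := maxratio_gt1 _ _ adm.
have N1 : 1 < maxratio P1 P0 := maxratio_gt1 _ _ (adm_sym _ _ adm).
case: adm => d0 d1 ss _.
have ss' : same_support P1 P0 by move=> y; rewrite ss.
set M := maxratio P0 P1 in M1 *; set N := maxratio P1 P0 in N1 *.
have fact : forall y, [/\ P0 y <= M * P1 y, P1 y <= N * P0 y, M * P1 y - P0 y <= M - 1,
     N * P0 y - P1 y <= N - 1 & 0 <= P1 y /\ P1 y <= 1].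
  move=> y; split.
  - exact: dist_le.
  - exact: dist_le.
  - exact: compl_le.
  - exact: compl_le.
  - by split; [case: d1 => h _; exact: h | exact: dist_le1].
have A1 : 0 < v * M * (N - 1) + u * (M - 1).
  by rewrite -mulrA; apply: pos2 => //; repeat apply: mulr_gt0; lra.
have A2 : 0 < v * (N - 1) + u * N * (M - 1).
  by rewrite -[u * N * _]mulrA; apply: pos2 => //; repeat apply: mulr_gt0; lra.
have A3 : 0 < v * N * (M - 1) + u * (N - 1).
  by rewrite -mulrA; apply: pos2 => //; repeat apply: mulr_gt0; lra.
have A4 : 0 < v * (M - 1) + u * M * (N - 1).
  by rewrite -[u * M * _]mulrA; apply: pos2 => //; repeat apply: mulr_gt0; lra.
split => huv; (apply: maxratio_le; first by rewrite divr_ge0 // ltW) => y;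
  rewrite !push_qsc //;
  case: (fact y) => h1 h2 h3 h4 [t0 t1];
  (apply: ratio_le; [nra | done | exact: ltW | ]);
  have [c1 c2] := coord_bound _ _ _ _ _ _ u0 v0 (ltW M1) (ltW N1) h1 h2 h3 h4.
- exact: c1.
- exact: c2.
Qed.

Lemma partA u v P0 P1 : 0 <= u -> 0 <= v -> 0 < u + v -> admissible P0 P1 ->
  DJinf (push (qsc u v) P0) (push (qsc u v) P1) <= `|v - u| / (v + u) * DJinf P0 P1
  /\ 0 < DJinf P0 P1.
Proof.
move=> u0 v0 uv adm.
have M1 : 1 < maxratio P0 P1 := maxratio_gt1 _ _ adm.
have N1 : 1 < maxratio P1 P0 := maxratio_gt1 _ _ (adm_sym _ _ adm).
have [b1 b2] := maxQ_bound _ _ _ _ u0 v0 uv adm.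
have [b3 b4] := maxQ_bound _ _ _ _ u0 v0 uv (adm_sym _ _ adm).
rewrite /DJinf /Dinf.
set M := maxratio P0 P1 in M1 b1 b2 b3 b4 *.
set N := maxratio P1 P0 in N1 b1 b2 b3 b4 *.
set Q0 := push (qsc u v) P0 in b1 b2 b3 b4 *.
set Q1 := push (qsc u v) P1 in b1 b2 b3 b4 *.
have lM : 0 < ln M := ln_gt0 M1.
have lN : 0 < ln N := ln_gt0 N1.
split; last lra.
set A1 := v * M * (N - 1) + u * (M - 1) in b1 b2 b3 b4 *.
set A2 := v * (N - 1) + u * N * (M - 1) in b1 b2 b3 b4 *.
set A3 := v * N * (M - 1) + u * (N - 1) in b1 b2 b3 b4 *.
set A4 := v * (M - 1) + u * M * (N - 1) in b1 b2 b3 b4 *.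
have pA1 : 0 < A1.
  by rewrite /A1 -mulrA; apply: pos2 => //; repeat apply: mulr_gt0; lra.
have pA2 : 0 < A2.
  by rewrite /A2 -[u * N * _]mulrA; apply: pos2 => //; repeat apply: mulr_gt0; lra.
have pA3 : 0 < A3.
  by rewrite /A3 -mulrA; apply: pos2 => //; repeat apply: mulr_gt0; lra.
have pA4 : 0 < A4.
  by rewrite /A4 -[u * M * _]mulrA; apply: pos2 => //; repeat apply: mulr_gt0; lra.
have pMN : 0 <= (M - 1) * (N - 1) by rewrite mulr_ge0 //; lra.
pose xs := M * (N - 1) / (M - 1).
pose ys := (N - 1) / (N * (M - 1)).
have m0 : 0 < M - 1 by lra.
have n0 : 0 < N - 1 by lra.
have nm0 : 0 < N * (M - 1) by rewrite mulr_gt0 //; lra.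
have hL : Lg u v xs - Lg u v ys = ln A1 - ln A2 + ln A3 - ln A4.
  rewrite /Lg.
  have -> : v * xs + u = A1 / (M - 1) by rewrite /xs /A1; field; rewrite gt_eqF.
  have -> : u * xs + v = A4 / (M - 1) by rewrite /xs /A4; field; rewrite gt_eqF.
  have -> : v * ys + u = A2 / (N * (M - 1)).
    by rewrite /ys /A2; field; rewrite gt_eqF //; lra.
  have -> : u * ys + v = A3 / (N * (M - 1)).
    by rewrite /ys /A3; field; rewrite gt_eqF //; lra.
  rewrite !lnD' //; lra.
have hx : ln xs - ln ys = ln M + ln N.
  rewrite /xs /ys !lnD' ?lnM' //; try lra.
  all: try (repeat apply: mulr_gt0; lra).
have ys0 : 0 < ys by rewrite /ys divr_gt0.
have hyx : ys <= xs.
  rewrite /xs /ys.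
  have -> : M * (N - 1) / (M - 1) = (N - 1) / (M - 1) * M.
    by field; rewrite gt_eqF.
  have -> : (N - 1) / (N * (M - 1)) = (N - 1) / (M - 1) * N^-1.
    by field; rewrite !gt_eqF //; lra.
  apply: ler_wpM2l; first by rewrite divr_ge0 //; lra.
  apply: (le_trans (y := 1)); last lra.
  by rewrite invf_le1 //; lra.
have lip := lip_up _ _ _ _ u0 v0 uv ys0 hyx.
rewrite hL hx in lip.
have [huv|huv] := leP u v.
- have e1 : ln (maxratio Q0 Q1) <= ln (A1 / A2).
    apply: ln_le_ge1 (b1 huv).
    rewrite ler_pdivlMr // mul1r.
    have -> : A1 = A2 + (v - u) * ((M - 1) * (N - 1)) by rewrite /A1 /A2; ring.
    by rewrite lerDl mulr_ge0 // subr_ge0.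
  have e2 : ln (maxratio Q1 Q0) <= ln (A3 / A4).
    apply: ln_le_ge1 (b3 huv).
    rewrite ler_pdivlMr // mul1r.
    have -> : A3 = A4 + (v - u) * ((M - 1) * (N - 1)) by rewrite /A3 /A4; ring.
    by rewrite lerDl mulr_ge0 // subr_ge0.
  rewrite !lnD' // in e1 e2.
  have := ler_norm (ln A1 - ln A2 + ln A3 - ln A4).
  lra.
- have e1 : ln (maxratio Q0 Q1) <= ln (A4 / A3).
    apply: ln_le_ge1 (b2 (ltW huv)).
    rewrite ler_pdivlMr // mul1r.
    have -> : A4 = A3 + (u - v) * ((M - 1) * (N - 1)) by rewrite /A3 /A4; ring.
    by rewrite lerDl mulr_ge0 // subr_ge0 ltW.
  have e2 : ln (maxratio Q1 Q0) <= ln (A2 / A1).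
    apply: ln_le_ge1 (b4 (ltW huv)).
    rewrite ler_pdivlMr // mul1r.
    have -> : A2 = A1 + (u - v) * ((M - 1) * (N - 1)) by rewrite /A1 /A2; ring.
    by rewrite lerDl mulr_ge0 // subr_ge0 ltW.
  rewrite !lnD' // in e1 e2.
  have := ler_norm (- (ln A1 - ln A2 + ln A3 - ln A4)).
  rewrite normrN.
  lra.
Qed.

Lemma sum_two P (a b : X) : a != b -> (forall x, x != a -> x != b -> P x = 0) ->
  \sum_x P x = P a + P b.
Proof.
move=> ab h.
rewrite (bigD1 a) //= (bigD1 b) /=; last by rewrite eq_sym.
rewrite big1 ?addr0 // => x /andP[xb xa]; exact: h.
Qed.

Lemma binary_pack P0 P1 (a b : X) : a != b -> is_dist P0 -> is_dist P1 ->
  (forall x, x != a -> x != b -> P0 x = 0 /\ P1 x = 0) ->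
  (exists x, P0 x != P1 x) -> 0 < P0 a < 1 -> 0 < P1 a < 1 ->
  [/\ admissible P0 P1, P0 b = 1 - P0 a, P1 b = 1 - P1 a & P0 a != P1 a].
Proof.
move=> ab d0 d1 z [x0 hx0] /andP[p0 p1] /andP[r0 r1].
have e0 : P0 b = 1 - P0 a.
  case: d0 => _; rewrite (sum_two _ _ _ ab) => [s|x xa xb]; first lra.
  by case: (z x xa xb).
have e1 : P1 b = 1 - P1 a.
  case: d1 => _; rewrite (sum_two _ _ _ ab) => [s|x xa xb]; first lra.
  by case: (z x xa xb).
have neq : P0 a != P1 a.
  apply/negP => /eqP eq; move: hx0.
  have [->|xa] := eqVneq x0 a; first by rewrite eq eqxx.
  have [->|xb] := eqVneq x0 b; first by rewrite e0 e1 eq eqxx.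
  by case: (z x0 xa xb) => -> ->; rewrite eqxx.
split => //; split => //; last by exists a.
move=> x.
have [->|xa] := eqVneq x a; first by rewrite !gt_eqF.
have [->|xb] := eqVneq x b; first by rewrite e0 e1 !gt_eqF //; lra.
by case: (z x xa xb) => -> ->.
Qed.

Lemma jratio_sym (W : X -> X -> R) P0 P1 : jratio W P0 P1 = jratio W P1 P0.
Proof. by rewrite /jratio /DJinf addrC [Dinf P1 P0 + _]addrC. Qed.

Lemma ln_le_max P Q x : 0 < P x / Q x -> ln (P x / Q x) <= ln (maxratio P Q).
Proof.
move=> h; rewrite ler_ln ?posrE //; first exact: maxratio_ub.
exact: lt_le_trans h (maxratio_ub _ _ _).
Qed.

Lemma binary_lower u v k al be P0 P1 (a b : X) :
  0 <= u -> 0 <= v -> 0 < u + v -> 0 <= k -> 0 <= al ->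
  (forall z, al < z < be -> k * ((v * z + u) * (u * z + v)) <= `|v ^+ 2 - u ^+ 2| * z) ->
  a != b -> is_dist P0 -> is_dist P1 ->
  (forall x, x != a -> x != b -> P0 x = 0 /\ P1 x = 0) ->
  P1 a < P0 a -> 0 < P1 a -> P0 a < 1 ->
  al < P1 a / (1 - P1 a) -> P0 a / (1 - P0 a) < be ->
  k * DJinf P0 P1 <= DJinf (push (qsc u v) P0) (push (qsc u v) P1).
Proof.
move=> u0 v0 uv k0 al0 hk ab d0 d1 z rp r0 p1 hal hbe.
set p := P0 a in rp p1 hbe *; set r := P1 a in rp r0 hal *.
have p0 : 0 < p by lra.
have r1 : r < 1 by lra.
have [adm e0 e1 _] := binary_pack _ _ _ _ ab d0 d1 z (ex_intro (fun x => P0 x != P1 x) a (negbT (gt_eqF rp))) (ltac:(apply/andP; split; assumption)) (ltac:(apply/andP; split; assumption)).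
rewrite -/p in e0; rewrite -/r in e1.
pose x := p / (1 - p); pose y := r / (1 - r).
have q1 : 0 < 1 - p by lra.
have q2 : 0 < 1 - r by lra.
have y0 : 0 < y by rewrite divr_gt0.
have yx : y <= x.
  rewrite /x /y ler_pdivrMr // mulrAC ler_pdivlMr //; nra.
have hP : DJinf P0 P1 <= ln x - ln y.
  have -> : ln x - ln y = ln (p / r) + ln ((1 - r) / (1 - p)).
    by rewrite /x /y !lnD' //; lra.
  rewrite /DJinf /Dinf; apply: lerD.
  - apply: ln_le_ge1; first by rewrite ler_pdivlMr // mul1r ltW.
    apply: maxratio_le; first by rewrite divr_ge0 // ltW.
    move=> w.
    have [->|wa] := eqVneq w a; first done.
    have [->|wb] := eqVneq w b.
      rewrite e0 e1; apply: (le_trans (y := 1)).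
        by rewrite ler_pdivrMr // mul1r; lra.
      by rewrite ler_pdivlMr // mul1r ltW.
    by case: (z w wa wb) => -> ->; rewrite mul0r divr_ge0 // ltW.
  - apply: ln_le_ge1; first by rewrite ler_pdivlMr // mul1r; lra.
    apply: maxratio_le; first by rewrite divr_ge0 // ltW.
    move=> w.
    have [->|wa] := eqVneq w a.
      apply: (le_trans (y := 1)).
        by rewrite ler_pdivrMr // mul1r ltW.
      by rewrite ler_pdivlMr // mul1r; lra.
    have [->|wb] := eqVneq w b; first by rewrite e0 e1.
    by case: (z w wa wb) => -> ->; rewrite mul0r divr_ge0 // ltW.
have hQ : `|Lg u v x - Lg u v y| <= DJinf (push (qsc u v) P0) (push (qsc u v) P1).
  have Q0a : push (qsc u v) P0 a = (1 - p) * (v * x + u).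
    by rewrite push_qsc // -/p /x; field; rewrite gt_eqF.
  have Q0b : push (qsc u v) P0 b = (1 - p) * (u * x + v).
    by rewrite push_qsc // e0 /x; field; rewrite gt_eqF.
  have Q1a : push (qsc u v) P1 a = (1 - r) * (v * y + u).
    by rewrite push_qsc // -/r /y; field; rewrite gt_eqF.
  have Q1b : push (qsc u v) P1 b = (1 - r) * (u * y + v).
    by rewrite push_qsc // e1 /y; field; rewrite gt_eqF.
  have x0 : 0 < x by rewrite divr_gt0.
  have vu : 0 < v + u by lra.
  have g1 : 0 < v * x + u by have := pos2 _ _ _ _ v0 u0 vu x0 ltr01; rewrite mulr1.
  have g2 : 0 < u * x + v by have := pos2 _ _ _ _ u0 v0 uv x0 ltr01; rewrite mulr1.
  have g3 : 0 < v * y + u by have := pos2 _ _ _ _ v0 u0 vu y0 ltr01; rewrite mulr1.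
  have g4 : 0 < u * y + v by have := pos2 _ _ _ _ u0 v0 uv y0 ltr01; rewrite mulr1.
  have pp : forall A B C D : R, 0 < A -> 0 < B -> 0 < C -> 0 < D -> 0 < A * B / (C * D).
    by move=> A B C D ? ? ? ?; apply: divr_gt0; apply: mulr_gt0.
  have ha := ln_le_max (push (qsc u v) P0) (push (qsc u v) P1) a.
  have hb := ln_le_max (push (qsc u v) P0) (push (qsc u v) P1) b.
  have ha' := ln_le_max (push (qsc u v) P1) (push (qsc u v) P0) a.
  have hb' := ln_le_max (push (qsc u v) P1) (push (qsc u v) P0) b.
  rewrite Q0a Q0b Q1a Q1b in ha hb ha' hb'.
  move: ha => /(_ (pp _ _ _ _ q1 g1 q2 g3)) ha.
  move: hb => /(_ (pp _ _ _ _ q1 g2 q2 g4)) hb.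
  move: ha' => /(_ (pp _ _ _ _ q2 g3 q1 g1)) ha'.
  move: hb' => /(_ (pp _ _ _ _ q2 g4 q1 g2)) hb'.
  rewrite !lnD' ?lnM' in ha hb ha' hb'; try (by apply: mulr_gt0); try done.
  rewrite /DJinf /Dinf /Lg ler_norml; apply/andP; split; lra.
have L := lip_low _ _ _ _ _ _ _ u0 v0 uv al0 hk hal yx hbe.
apply: (le_trans _ (le_trans L hQ)).
by apply: ler_wpM2l.
Qed.

Lemma binary_j u v k al be P0 P1 (a b : X) :
  0 <= u -> 0 <= v -> 0 < u + v -> 0 <= k -> 0 <= al ->
  (forall z, al < z < be -> k * ((v * z + u) * (u * z + v)) <= `|v ^+ 2 - u ^+ 2| * z) ->
  a != b -> is_dist P0 -> is_dist P1 ->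
  (forall x, x != a -> x != b -> P0 x = 0 /\ P1 x = 0) ->
  (exists x, P0 x != P1 x) ->
  0 < P0 a < 1 -> 0 < P1 a < 1 ->
  al < P0 a / (1 - P0 a) < be -> al < P1 a / (1 - P1 a) < be ->
  k <= jratio (qsc u v) P0 P1 /\ jratio (qsc u v) P0 P1 <= `|v - u| / (v + u).
Proof.
move=> u0 v0 uv k0 al0 hk ab d0 d1 z ex hp hr hx hy.
have [adm e0 e1 ne] := binary_pack _ _ _ _ ab d0 d1 z ex hp hr.
have [A1 A2] := partA _ _ _ _ u0 v0 uv adm.
split; last by rewrite /jratio ler_pdivrMr.
case/andP: hp => p0 p1; case/andP: hr => r0 r1.
case/andP: hx => x1 x2; case/andP: hy => y1 y2.
have [rp|pr] := ltP (P1 a) (P0 a).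
  have := binary_lower _ _ _ _ _ _ _ _ _ u0 v0 uv k0 al0 hk ab d0 d1 z rp r0 p1 y1 x2.
  by rewrite /jratio ler_pdivlMr // mulrC.
have pr' : P0 a < P1 a by rewrite lt_def eq_sym ne pr.
have z' : forall x, x != a -> x != b -> P1 x = 0 /\ P0 x = 0.
  by move=> x xa xb; case: (z x xa xb).
have [B1 B2] := partA _ _ _ _ u0 v0 uv (adm_sym _ _ adm).
have := binary_lower _ _ _ _ _ _ _ _ _ u0 v0 uv k0 al0 hk ab d1 d0 z' pr' p0 r1 x1 y2.
by rewrite jratio_sym /jratio ler_pdivlMr // mulrC.
Qed.

Lemma lin_aux (a b c d f : R) : b <= c -> c <= d -> 0 <= f -> a - d + b - f <= a.
Proof. move=> *; lra. Qed.

Lemma cond_ok (u v e z : R) : 0 <= u -> 0 <= v -> 0 < u + v -> 0 < e ->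
  1 - Num.min (2^-1) e < z < 1 + Num.min (2^-1) e ->
  Num.max 0 (`|v - u| / (v + u) - e) * ((v * z + u) * (u * z + v)) <= `|v ^+ 2 - u ^+ 2| * z.
Proof.
move=> u0 v0 uv e0.
set d := Num.min (2^-1) e.
have d0 : 0 < d by rewrite lt_min e0 invr_gt0 ltr0n.
have d1 : d <= 2^-1 by rewrite ge_min lexx.
have de : d <= e by rewrite ge_min lexx orbT.
move=> /andP[z1 z2].
set eta := `|v - u| / (v + u).
have vu : 0 < v + u by lra.
have eta0 : 0 <= eta by rewrite divr_ge0 // ltW.
have eta1 : eta <= 1.
  rewrite ler_pdivrMr // mul1r ler_norml; apply/andP; split; lra.
have hn : `|v ^+ 2 - u ^+ 2| = eta * (u + v) ^+ 2.
  rewrite /eta subr_sqr normrM (ger0_norm (ltW vu)) addrC; field.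
  by rewrite gt_eqF.
have hP : (v * z + u) * (u * z + v) = (u + v) ^+ 2 * z + u * v * (z - 1) ^+ 2 by ring.
have z0 : 0 < z by lra.
have hS : 0 <= (u + v) ^+ 2 by rewrite sqr_ge0.
have huv : u * v <= (u + v) ^+ 2 / 4.
  have : 0 <= (u - v) ^+ 2 by rewrite sqr_ge0.
  have -> : (u + v) ^+ 2 / 4 = u * v + (u - v) ^+ 2 / 4 by field.
  move=> h; rewrite lerDl; rewrite divr_ge0 //.
have hw : (z - 1) ^+ 2 <= e / 2.
  have : (z - 1) ^+ 2 <= d * d.
    rewrite expr2; have h1 : `|z - 1| <= d.
      by rewrite ler_norml; apply/andP; split; lra.
    have := ler_pM (normr_ge0 _) (normr_ge0 _) h1 h1.
    by rewrite -normrM ger0_norm // -expr2 sqr_ge0.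
  have : d * d <= d / 2 by rewrite ler_pdivlMr //; nra.
  lra.
have uv0 : 0 <= u * v by rewrite mulr_ge0.
have w0 : 0 <= (z - 1) ^+ 2 by rewrite sqr_ge0.
rewrite hP hn.
have [h|h] := leP (eta - e) 0.
  rewrite mul0r; apply: mulr_ge0 => //; last exact: ltW.
  by rewrite mulr_ge0.

set w := (z - 1) ^+ 2 in hw w0 *.
set S := (u + v) ^+ 2 in hS huv *.
have h1 : eta * (u * v * w) <= u * v * w by rewrite ler_piMl // mulr_ge0.
have h2 : u * v * w <= S / 4 * (e / 2) by rewrite ler_pM.
have h3 : 0 <= e * (S * (z - 1 / 8)) by apply: mulr_ge0; [lra | apply: mulr_ge0 => //; lra].
have h4 : 0 <= e * (u * v * w) by apply: mulr_ge0; [exact: ltW | rewrite mulr_ge0].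
have -> : (eta - e) * (S * z + u * v * w) =
  eta * S * z - e * (S * z) + eta * (u * v * w) - e * (u * v * w) by ring.
have h5 : S / 4 * (e / 2) = e * S / 8 by field.
have h6 : e * (S * (z - 1 / 8)) = e * (S * z) - e * S / 8 by field.
apply: lin_aux (le_trans h1 h2) _ h4.
by rewrite h5 -subr_ge0 -h6.
Qed.

Lemma near_half (p d : R) : 0 < d -> d <= 2^-1 -> `|2^-1 - p| < d / 8 ->
  0 < p < 1 /\ 1 - d < p / (1 - p) < 1 + d.
Proof.
move=> d0 d1; rewrite ltr_norml => /andP[h1 h2].
have q : 0 < 1 - p by lra.
split; first (apply/andP; split; lra).
apply/andP; split.
  rewrite ltr_pdivlMr //; nra.
rewrite ltr_pdivrMr //; nra.
Qed.

Lemma conv_seq u v (a b : X) (P0 P1 : nat -> X -> R) :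
  0 <= u -> 0 <= v -> 0 < u + v -> a != b -> unif_binary_seq a b P0 P1 ->
  (fun n => jratio (qsc u v) (P0 n) (P1 n)) @ \oo --> `|v - u| / (v + u).
Proof.
move=> u0 v0 uv ab [hd hz hne [ha0 _] [ha1 _]].
apply/cvgrPdist_le => e e0.
set d := Num.min (2^-1) e.
have d0 : 0 < d by rewrite lt_min e0 invr_gt0 ltr0n.
have d1 : d <= 2^-1 by rewrite ge_min lexx.
have d8 : 0 < d / 8 by rewrite divr_gt0.
move/cvgrPdist_lt: ha0 => /(_ _ d8) h0.
move/cvgrPdist_lt: ha1 => /(_ _ d8) h1.
near=> n.
have hp : `|2^-1 - P0 n a| < d / 8 by near: n; exact: h0.
have hr : `|2^-1 - P1 n a| < d / 8 by near: n; exact: h1.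
have [hp1 hp2] := near_half _ _ d0 d1 hp.
have [hr1 hr2] := near_half _ _ d0 d1 hr.
set eta := `|v - u| / (v + u).
have k0 : 0 <= Num.max 0 (eta - e) by rewrite le_max lexx.
have al0 : 0 <= 1 - d by lra.
have hk := fun z => cond_ok _ _ _ z u0 v0 uv e0.
have [hd0 hd1] := hd n.
have [L U] := binary_j _ _ _ _ _ _ _ _ _ u0 v0 uv k0 al0 hk ab hd0 hd1 (hz n) (hne n)
   hp1 hr1 hp2 hr2.
rewrite ger0_norm; last by rewrite subr_ge0.
have : eta - e <= Num.max 0 (eta - e) by rewrite le_max lexx orbT.
lra.
Unshelve. all: end_near.
Qed.

Definition hseq (n : nat) : R := (n.+1%:R)^-1 / 4.

Lemma hseq_pos n : 0 < hseq n /\ hseq n <= 4^-1.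
Proof.
rewrite /hseq; split; first by rewrite divr_gt0 // invr_gt0 ltr0n.
rewrite ler_pdivrMr // mulVf ?pnatr_eq0 //.
by rewrite invf_le1 ?ler1n // ltr0n.
Qed.

Lemma hseq_cvg (c : R) : (fun n => c + hseq n) @ \oo --> c.
Proof.
have H : (fun n => hseq n) @ \oo --> (0 : R).
  have := @cvgMr_tmp _ _ _ _ (@harmonic R) 0 (4^-1) cvg_harmonic.
  by rewrite mul0r => h; exact: h.
have := cvgD (cvg_cst c) H.
by rewrite addr0 => h; exact: h.
Qed.

Lemma hseq_cvgN (c : R) : (fun n => c - hseq n) @ \oo --> c.
Proof.
have H : (fun n => hseq n) @ \oo --> (0 : R).
  have := @cvgMr_tmp _ _ _ _ (@harmonic R) 0 (4^-1) cvg_harmonic.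
  by rewrite mul0r => h; exact: h.
have := cvgB (cvg_cst c) H.
by rewrite subr0 => h; exact: h.
Qed.

Definition sq0 (a b : X) (n : nat) (x : X) : R :=
  if x == a then 2^-1 + hseq n else if x == b then 2^-1 - hseq n else 0.
Definition sq1 (a b : X) (n : nat) (x : X) : R :=
  if x == a then 2^-1 - hseq n else if x == b then 2^-1 + hseq n else 0.

Lemma exists_seq (a b : X) : a != b ->
  unif_binary_seq a b (sq0 a b) (sq1 a b) /\ (forall n, admissible (sq0 a b n) (sq1 a b n)).
Proof.
move=> ab.
have ba : (b == a) = false by rewrite eq_sym (negbTE ab).
have zs : forall n x, x != a -> x != b -> sq0 a b n x = 0 /\ sq1 a b n x = 0.
  by move=> n x xa xb; rewrite /sq0 /sq1 (negbTE xa) (negbTE xb).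
have dist : forall n, is_dist (sq0 a b n) /\ is_dist (sq1 a b n).
  move=> n; have [h0 h1] := hseq_pos n.
  split; split.
  - by move=> x; rewrite /sq0; case: ifP => _; [|case: ifP => _]; lra.
  - rewrite (sum_two _ _ _ ab); last by move=> x xa xb; case: (zs n x xa xb).
    rewrite /sq0 eqxx ba eqxx; lra.
  - by move=> x; rewrite /sq1; case: ifP => _; [|case: ifP => _]; lra.
  - rewrite (sum_two _ _ _ ab); last by move=> x xa xb; case: (zs n x xa xb).
    rewrite /sq1 eqxx ba eqxx; lra.
have ne : forall n, exists x, sq0 a b n x != sq1 a b n x.
  move=> n; exists a; rewrite /sq0 /sq1 eqxx.
  have [h0 _] := hseq_pos n.
  apply/eqP; lra.
split.
  split => //.
  - split.
      have -> : (fun n => sq0 a b n a) = (fun n => 2^-1 + hseq n).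
        by apply/funext => n; rewrite /sq0 eqxx.
      exact: hseq_cvg.
    have -> : (fun n => sq0 a b n b) = (fun n => 2^-1 - hseq n).
      by apply/funext => n; rewrite /sq0 ba eqxx.
    exact: hseq_cvgN.
  - split.
      have -> : (fun n => sq1 a b n a) = (fun n => 2^-1 - hseq n).
        by apply/funext => n; rewrite /sq1 eqxx.
      exact: hseq_cvgN.
    have -> : (fun n => sq1 a b n b) = (fun n => 2^-1 + hseq n).
      by apply/funext => n; rewrite /sq1 ba eqxx.
    exact: hseq_cvg.
move=> n; have [h0 h1] := hseq_pos n.
have [d0 d1] := dist n.
have [] := binary_pack _ _ _ _ ab d0 d1 (zs n) (ne n) => //.
  by rewrite /sq0 eqxx; apply/andP; split; lra.
by rewrite /sq1 eqxx; apply/andP; split; lra.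
Qed.
End SX.
End S.

Theorem theorem4p6 (R : realType) (q : nat) (X : finType) (u v : R) :
  (2 <= q)%N -> #|X| = q ->
  0 <= u <= 1 -> 0 <= v <= 1 -> v = 1 - (q%:R - 1) * u ->
  sup [set r : R | exists P0 P1 : X -> R,
         admissible P0 P1 /\ r = jratio (qsc u v) P0 P1]
    = `|v - u| / (v + u)
  /\ (forall a b : X, a != b ->
        (exists P0 P1 : nat -> X -> R, unif_binary_seq a b P0 P1)
        /\ (forall P0 P1 : nat -> X -> R, unif_binary_seq a b P0 P1 ->
              (fun n => jratio (qsc u v) (P0 n) (P1 n)) @ \oo
                --> `|v - u| / (v + u))).
Proof.
move=> q2 cX /andP[u0 u1] /andP[v0 v1] hv.
have uv : 0 < u + v.
  have [u0'|ule] := ltP 0 u; first lra.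
  have u00 : u = 0 by lra.
  by rewrite hv u00 mulr0 subr0 add0r ltr01.
split; last first.
  move=> a b ab; split.
    have [h _] := exists_seq R X a b ab.
    by exists (sq0 R X a b), (sq1 R X a b).
  by move=> P0 P1 h; exact: (conv_seq R X u v a b P0 P1 u0 v0 uv ab h).
have : (1 < #|X|)%N by rewrite cX.
case/card_gt1P => a [b [_ _ ab]].
set eta := `|v - u| / (v + u).
set S := [set r : R | _].
have ub : ubound S eta.
  move=> r [P0 [P1 [adm ->]]].
  have [A B] := partA R X u v P0 P1 u0 v0 uv adm.
  by rewrite /jratio ler_pdivrMr.
have [hseqP hadm] := exists_seq R X a b ab.
have ne : S !=set0.
  by exists (jratio (qsc u v) (sq0 R X a b 0) (sq1 R X a b 0)); exists (sq0 R X a b 0), (sq1 R X a b 0).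
have hs : has_sup S by split => //; exists eta.
have cv := conv_seq R X u v a b _ _ u0 v0 uv ab hseqP.
apply/le_anti/andP; split; first exact: ge_sup.
rewrite leNgt; apply/negP => lt.
have eps0 : 0 < eta - sup S by rewrite subr_gt0.
move/cvgrPdist_lt: cv => /(_ _ eps0) ev.
have [n hn] := filter_ex ev.
have inS : S (jratio (qsc u v) (sq0 R X a b n) (sq1 R X a b n)).
  by exists (sq0 R X a b n), (sq1 R X a b n).
have := sup_upper_bound hs inS.
have := ler_norm (eta - jratio (qsc u v) (sq0 R X a b n) (sq1 R X a b n)).
lra.
Qed.
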